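(* Let $(L,S,\alpha,\beta)$ be a feasible point of the SDP (RS) built from the data $D_\Delta=D+\Delta$, and let $K=F_K(L,D_\Delta)=U_\Delta L(X_\Delta L)^{-1}$. (i) If $\Delta=0$, then $\mathcal{J}(K)\le J_{\rm LQR}$ (in particular $A+BK$ is Schur). (ii) For every $\Delta$ with $\|\Delta\|_{\max}\le\epsilon$, the closed-loop matrix $A+BK$ is Schur stable, $\rho(A+BK)<1$.
   Context: $A\in\mathbb{R}^{n\times n}$, $B\in\mathbb{R}^{n\times m}$ unknown; clean data $D=[Z^{\sf T}\ X^{\sf T}\ U^{\sf T}]^{\sf T}$, $Z,X\in\mathbb{R}^{n\times T}$, $U\in\mathbb{R}^{m\times T}$ with $Z=AX+BU$. Perturbation $\Delta\in\mathbb{R}^{(2n+m)\times T}$, $D_\Delta=D+\Delta=[Z_\Delta^{\sf T}\ X_\Delta^{\sf T}\ U_\Delta^{\sf T}]^{\sf T}$; $\|\Delta\|_{\max}$ is the largest absolute entry; $\epsilon>0$, $J_{\rm LQR}>0$. $Q\succeq0$, $R\succ0$ with symmetric positive definite square root $V$. LQR cost: for $K$ with $A+BK$ Schur, $\mathcal{J}(K)=\sum_{i=1}^n\sum_{t\ge0}(x_t^{\sf T}Qx_t+u_t^{\sf T}Ru_t)$ along $x_{t+1}=Ax_t+Bu_t$, $u_t=Kx_t$, $x_0=e_i$ (equivalently ${\rm tr}((Q+K^{\sf T}RK)P^\star)$ with $P^\star=(A+BK)P^\star(A+BK)^{\sf T}+I$); $\mathcal{J}(K)=+\infty$ if $A+BK$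 is not Schur. Define $F(L,S,D_\Delta)={\rm diag}\Big(\begin{bmatrix}S & VU_\Delta L\\ \ast & X_\Delta L\end{bmatrix},\begin{bmatrix}X_\Delta L-I_n & Z_\Delta L\\ \ast & X_\Delta L\end{bmatrix}\Big)$. The SDP (RS) in variables $L\in\mathbb{R}^{T\times n}$, $S\in\mathbb{R}^{m\times m}$, $\alpha,\beta\in\mathbb{R}$ is the feasibility problem: ${\rm tr}(QX_\Delta L)+{\rm tr}(S)\le J_{\rm LQR}$; $F(L,S,D_\Delta)\succeq0$; $$\begin{bmatrix}X_\Delta L-\beta I_n & 0_{n,n} & 0_{n,m} & 0_{n,n}\\ 0_{n,n} & -X_\Delta L & -L^{\sf T}U_\Delta^{\sf T} & 0_{n,n}\\ 0_{m,n} & \ast & 0_{m,m} & U_\Delta L\\ 0_{n,n} & 0_{n,n} & \ast & X_\Delta L\end{bmatrix}-\alpha N_\Delta\succeq0;\quad \alpha\ge0,\ \beta\ge1,$$ where $N_\Delta={\rm diag}\Big(\bar D_\Delta^{\sf T}\begin{bmatrix}\epsilon^2(2n+m)T\,I_{2n+m} & 0\\ 0 & -I_T\end{bmatrix}\bar D_\Delta,\ 0_{n,n}\Big)$ and $\bar D_\Delta=\begin{bmatrix}I_{2n+m}\\ [Z_\Delta^{\sf T}\ \ -X_\Delta^{\sf T}\ \ -U_\Delta^{\sf T}]\end{bmatrix}\in\mathbb{R}^{(2n+m+T)\times(2n+m)}$. In these matrix inequalities, $\ast$ denotes the block determined by symmetry, and $M\succeq0$ requires $M$ to be symmetric (in particular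 $X_\Delta L$ and $S$ are symmetric). *)

(* Defs.v *)
From HB Require Import structures.
From mathcomp Require Import all_boot all_order all_algebra.
From mathcomp Require Import all_classical all_reals all_analysis.
From mathcomp Require Import complex.
Set Implicit Arguments. Unset Strict Implicit. Unset Printing Implicit Defensive.
Import Order.TTheory GRing.Theory Num.Theory.
Local Open Scope ring_scope.

Section Defs.
Variable R : realType.

Definition psd (k : nat) (M : 'M[R]_k) : Prop :=
  M^T = M /\ forall v : 'cV[R]_k, 0 <= (v^T *m M *m v) 0 0.

Definition pd (k : nat) (M : 'M[R]_k) : Prop :=
  M^T = M /\ forall v : 'cV[R]_k, v != 0 -> 0 < (v^T *m M *m v) 0 0.

Definition schur (k : nat) (M : 'M[R]_k) : Prop :=
  forall z : R[i], root (char_poly (map_mx (fun x : R => (x%:C)%C) M)) z -> `|z| < 1.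

Definition mx_maxnorm (p q : nat) (M : 'M[R]_(p, q)) : R :=
  \big[Num.max/0]_(i < p) \big[Num.max/0]_(j < q) `|M i j|.

Definition lqr_cost (n m : nat) (A : 'M[R]_n) (B : 'M[R]_(n, m))
    (Q : 'M[R]_n) (Rw : 'M[R]_m) (K : 'M[R]_(m, n)) : \bar R :=
  if `[< schur (A + B *m K) >] then
    (\sum_(i < n) \sum_(t <oo)
        (let x : 'cV[R]_n := (A + B *m K) ^+ t *m delta_mx i (@ord0 0) in
         let u : 'cV[R]_m := K *m x in
         ((x^T *m Q *m x) 0 0 + (u^T *m Rw *m u) 0 0)%:E))%E
  else +oo%E.

Definition Zpart (n m T : nat) (D : 'M[R]_(n + n + m, T)) : 'M[R]_(n, T) :=
  usubmx (usubmx D).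
Definition Xpart (n m T : nat) (D : 'M[R]_(n + n + m, T)) : 'M[R]_(n, T) :=
  dsubmx (usubmx D).
Definition Upart (n m T : nat) (D : 'M[R]_(n + n + m, T)) : 'M[R]_(m, T) :=
  dsubmx D.

Definition Fmat (n m T : nat) (V : 'M[R]_m) (L : 'M[R]_(T, n)) (S : 'M[R]_m)
    (D : 'M[R]_(n + n + m, T)) : 'M[R]_((m + n) + (n + n)) :=
  let Z := Zpart D in let X := Xpart D in let U := Upart D in
  block_mx (block_mx S (V *m U *m L) (V *m U *m L)^T (X *m L)) 0
           0 (block_mx (X *m L - 1%:M) (Z *m L) (Z *m L)^T (X *m L)).

Definition Dbar (n m T : nat) (D : 'M[R]_(n + n + m, T)) :
    'M[R]_(n + n + m + T, n + n + m) :=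
  col_mx 1%:M (row_mx (row_mx (Zpart D)^T (- (Xpart D)^T)) (- (Upart D)^T)).

Definition Nmat (n m T : nat) (eps : R) (D : 'M[R]_(n + n + m, T)) :
    'M[R]_(n + n + m + n) :=
  block_mx ((Dbar D)^T *m
              block_mx ((eps ^+ 2 * (n + n + m)%:R * T%:R)%:M) 0 0 (- 1%:M)
            *m Dbar D) 0 0 (0 : 'M[R]_n).

Definition Gmat (n m T : nat) (beta : R) (L : 'M[R]_(T, n))
    (D : 'M[R]_(n + n + m, T)) : 'M[R]_(n + n + m + n) :=
  let X := Xpart D in let U := Upart D in
  block_mx
    (block_mx (block_mx (X *m L - beta%:M) 0 0 (- (X *m L)))
              (col_mx (0 : 'M[R]_(n, m)) (- (L^T *m U^T)))
              (row_mx (0 : 'M[R]_(m, n)) (- (L^T *m U^T))^T)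
              (0 : 'M[R]_m))
    (col_mx (0 : 'M[R]_(n + n, n)) (U *m L))
    (row_mx (0 : 'M[R]_(n, n + n)) (U *m L)^T)
    (X *m L).

Definition RS_feasible (n m T : nat) (Q : 'M[R]_n) (V : 'M[R]_m)
    (eps JLQR : R) (D : 'M[R]_(n + n + m, T))
    (L : 'M[R]_(T, n)) (S : 'M[R]_m) (alpha beta : R) : Prop :=
  [/\ \tr (Q *m (Xpart D *m L)) + \tr S <= JLQR,
      psd (Fmat V L S D),
      psd (Gmat beta L D - alpha *: Nmat eps D),
      0 <= alpha & 1 <= beta].

Definition FK (n m T : nat) (L : 'M[R]_(T, n)) (D : 'M[R]_(n + n + m, T)) :
    'M[R]_(m, n) :=
  Upart D *m L *m invmx (Xpart D *m L).

End Defs.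

(* Main.v *)
Require Import Defs.
From HB Require Import structures.
From mathcomp Require Import all_boot all_order all_algebra.
From mathcomp Require Import all_classical all_reals all_analysis.
From mathcomp Require Import complex.
From mathcomp Require Import ring lra.
Set Implicit Arguments. Unset Strict Implicit. Unset Printing Implicit Defensive.
Import Order.TTheory GRing.Theory Num.Theory.
Local Open Scope ring_scope.
Definition qf (R : realType) k (G : 'M[R]_k) (x : 'rV[R]_k) : R := (x *m G *m x^T) 0 0.

Lemma psd_qf (R : realType) k (G : 'M[R]_k) : psd G -> forall x, 0 <= qf G x.
Proof. by case=> _ H x; have := H x^T; rewrite trmxK. Qed.

Lemma addE (R : realType) p q (M N : 'M[R]_(p,q)) i j : (M + N) i j = M i j + N i j.
Proof. by rewrite mxE. Qed.
Lemma oppE (R : realType) p q (M : 'M[R]_(p,q)) i j : (- M) i j = - M i j.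
Proof. by rewrite mxE. Qed.
Lemma scaleE (R : realType) p q a (M : 'M[R]_(p,q)) i j : (a *: M) i j = a * M i j.
Proof. by rewrite mxE. Qed.

Lemma qf_block (R : realType) p q (a : 'M[R]_p) b c (d : 'M[R]_q) x y :
  qf (block_mx a b c d) (row_mx x y) =
  qf a x + (x *m b *m y^T) 0 0 + (y *m c *m x^T) 0 0 + qf d y.
Proof.
rewrite /qf tr_row_mx mul_row_block mul_row_col !mulmxDl !addE.
lra.
Qed.

Lemma entry_tr (R : realType) (M : 'M[R]_1) : M^T 0 0 = M 0 0.
Proof. by rewrite mxE. Qed.

Lemma cross_sym (R : realType) p q (b : 'M[R]_(p,q)) (x : 'rV[R]_p) (y : 'rV[R]_q) :
  (y *m b^T *m x^T) 0 0 = (x *m b *m y^T) 0 0.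
Proof. by rewrite -entry_tr !trmx_mul !trmxK mulmxA. Qed.
Lemma qf_comb (R : realType) k (Y : 'M[R]_k) (a b : 'rV[R]_k) r s : Y^T = Y ->
  qf Y (r *: a + s *: b) = r^+2 * qf Y a + 2 * r * s * (a *m Y *m b^T) 0 0 + s^+2 * qf Y b.
Proof.
move=> HY.
have h: (b *m Y *m a^T) 0 0 = (a *m Y *m b^T) 0 0 by rewrite -[in LHS]HY cross_sym.
rewrite /qf linearD /= !linearZ /= mulmxDl !mulmxDr !addE.
rewrite -!scalemxAl -!scalemxAr !scaleE !mulmxDl !addE -!scalemxAl !scaleE h; ring.
Qed.

Lemma rv_sq_pos (R : realType) k (x : 'rV[R]_k) : 0 <= (x *m x^T) 0 0.
Proof. rewrite mxE; apply: sumr_ge0 => i _; rewrite mxE; by rewrite -expr2 sqr_ge0. Qed.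

Lemma rv_sq_eq0 (R : realType) k (x : 'rV[R]_k) : (x *m x^T) 0 0 = 0 -> x = 0.
Proof.
rewrite mxE => H; apply/rowP => j; rewrite mxE.
have hp : forall i : 'I_k, true -> 0 <= x 0 i * x^T i 0.
  by move=> i _; rewrite mxE -expr2 sqr_ge0.
have := @psumr_eq0P _ _ xpredT (fun i => x 0 i * x^T i 0) hp H j isT.
rewrite [x^T j 0]mxE => h2.
by apply/eqP; rewrite -[x 0 j == 0]orbb -mulf_eq0 h2.
Qed.
Lemma ReM (R : realType) (w : R[i]) (x : R) : complex.Re (w * x%:C)%C = complex.Re w * x.
Proof. by case: w => a b; simpc. Qed.
Lemma ImM (R : realType) (w : R[i]) (x : R) : complex.Im (w * x%:C)%C = complex.Im w * x.
Proof. by case: w => a b; simpc. Qed.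
Lemma ReM2 (R : realType) (w z : R[i]) : complex.Re (z * w) = complex.Re z * complex.Re w - complex.Im z * complex.Im w.
Proof. by case: w => a b; case: z => c d; simpc. Qed.
Lemma ImM2 (R : realType) (w z : R[i]) : complex.Im (z * w) = complex.Re z * complex.Im w + complex.Im z * complex.Re w.
Proof. by case: w => a b; case: z => c d; simpc. Qed.

Lemma lyap_schur (R : realType) n (M Y : 'M[R]_n) : Y^T = Y -> (forall x, 0 <= qf Y x) ->
  (forall x : 'rV[R]_n, qf Y (x *m M) + (x *m x^T) 0 0 <= qf Y x) -> schur M.
Proof.
move=> HY Hpos Hly z; rewrite -eigenvalue_root_char => /eigenvalueP [v Hv vnz].
set a := map_mx (@complex.Re R) v; set b := map_mx (@complex.Im R) v.
set r := complex.Re z; set s := complex.Im z.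
have Ha : a *m M = r *: a + (- s) *: b.
  apply/rowP => j; have := congr1 (fun w : 'rV[R[i]]_n => complex.Re (w 0 j)) Hv.
  rewrite /= !mxE raddf_sum /= ReM2 => E.
  rewrite mulNr /r /s -E; apply: eq_bigr => k _; by rewrite !mxE ReM.
have Hb : b *m M = s *: a + r *: b.
  apply/rowP => j; have := congr1 (fun w : 'rV[R[i]]_n => complex.Im (w 0 j)) Hv.
  rewrite /= !mxE raddf_sum /= ImM2 => E.
  rewrite addrC /r /s -E; apply: eq_bigr => k _; by rewrite !mxE ImM.
have Hab : qf Y (a *m M) + qf Y (b *m M) = (r^+2 + s^+2) * (qf Y a + qf Y b).
  rewrite Ha Hb !qf_comb //; ring.
set N := (a *m a^T) 0 0 + (b *m b^T) 0 0.
have Npos : 0 < N.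
  rewrite lt_def addr_ge0 ?rv_sq_pos // andbT; apply/negP => /eqP hN.
  have pa := rv_sq_pos a; have pb := rv_sq_pos b.
  have ha : (a *m a^T) 0 0 = 0 by rewrite /N in hN; lra.
  have hb : (b *m b^T) 0 0 = 0 by rewrite /N in hN; lra.
  move/rv_sq_eq0: ha => ha; move/rv_sq_eq0: hb => hb.
  move/negP: vnz; apply; apply/eqP/rowP => j.
  have := congr1 (fun w : 'rV[R]_n => w 0 j) ha; have := congr1 (fun w : 'rV[R]_n => w 0 j) hb.
  rewrite !mxE; case: (v 0 j) => p q /= -> ->; by [].
have H1 := Hly a; have H2 := Hly b.
have Fp : 0 <= qf Y a + qf Y b by rewrite addr_ge0.
rewrite normc_def -[1]/((1:R)%:C)%C ltcR -sqrtr1 ltr_sqrt //.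
rewrite ltNge; apply/negP => h.
have : qf Y a + qf Y b <= (r^+2 + s^+2) * (qf Y a + qf Y b) by rewrite ler_peMl.
rewrite /N in Npos; lra.
Qed.
Lemma qfD (R : realType) k (G H : 'M[R]_k) x : qf (G + H) x = qf G x + qf H x.
Proof. by rewrite /qf mulmxDr mulmxDl addE. Qed.
Lemma qfN (R : realType) k (G : 'M[R]_k) x : qf (- G) x = - qf G x.
Proof. by rewrite /qf mulmxN mulNmx oppE. Qed.
Lemma qfB (R : realType) k (G H : 'M[R]_k) x : qf (G - H) x = qf G x - qf H x.
Proof. by rewrite qfD qfN. Qed.
Lemma qfZ (R : realType) k a (G : 'M[R]_k) x : qf (a *: G) x = a * qf G x.
Proof. by rewrite /qf -scalemxAr -scalemxAl scaleE. Qed.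
Lemma qf_scal (R : realType) k a (x : 'rV[R]_k) : qf a%:M x = a * (x *m x^T) 0 0.
Proof. by rewrite /qf mul_mx_scalar -scalemxAl scaleE. Qed.
Lemma qf0v (R : realType) k (G : 'M[R]_k) : qf G 0 = 0.
Proof. by rewrite /qf mul0mx mul0mx mxE. Qed.
Lemma qf0m (R : realType) k (x : 'rV[R]_k) : qf 0 x = 0.
Proof. by rewrite /qf mulmx0 mul0mx mxE. Qed.
Lemma cr0l (R : realType) p q (b : 'M[R]_(p,q)) (y : 'rV[R]_q) : ((0 : 'rV[R]_p) *m b *m y^T) 0 0 = 0.
Proof. by rewrite !mul0mx mxE. Qed.
Lemma cr0r (R : realType) p q (b : 'M[R]_(p,q)) (x : 'rV[R]_p) : (x *m b *m (0 : 'rV[R]_q)^T) 0 0 = 0.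
Proof. by rewrite trmx0 mulmx0 mxE. Qed.
Lemma cr0m (R : realType) p q (x : 'rV[R]_p) (y : 'rV[R]_q) : (x *m (0 : 'M[R]_(p,q)) *m y^T) 0 0 = 0.
Proof. by rewrite mulmx0 mul0mx mxE. Qed.

Lemma qf_block_sym (R : realType) p q (a : 'M[R]_p) b (d : 'M[R]_q) x y :
  qf (block_mx a b b^T d) (row_mx x y) = qf a x + 2 * (x *m b *m y^T) 0 0 + qf d y.
Proof. rewrite qf_block cross_sym; ring. Qed.

Section FmatFacts.
End FmatFacts.

Lemma Fmat_facts (R : realType) n m T (V : 'M[R]_m) (L : 'M[R]_(T, n)) (S : 'M[R]_m)
    (D : 'M[R]_(n + n + m, T)) :
  psd (Fmat V L S D) ->
  let Y := Xpart D *m L in let W := Upart D *m L in let Zl := Zpart D *m L in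
  [/\ Y^T = Y, S^T = S,
      forall x y, 0 <= qf S x + 2 * (x *m (V *m W) *m y^T) 0 0 + qf Y y &
      forall y z, 0 <= qf (Y - 1%:M) y + 2 * (y *m Zl *m z^T) 0 0 + qf Y z].
Proof.
move=> H Y W Zl; have [Hs Hq] := H.
have E : Fmat V L S D = block_mx (block_mx S (V *m W) (V *m W)^T Y) 0 0 
           (block_mx (Y - 1%:M) Zl Zl^T Y) by rewrite /W mulmxA.
move: Hs; rewrite E !tr_block_mx !trmx0 => /eq_block_mx [H1 _ _ H4].
move/eq_block_mx: H1 => [HS _ _ HY].
split => //.
- move=> x y; have := psd_qf H (row_mx (row_mx x y) 0).
  by rewrite E qf_block cr0r cr0l qf0v !addr0 qf_block_sym.
- move=> y z; have := psd_qf H (row_mx 0 (row_mx y z)).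
  by rewrite E qf_block cr0r cr0l qf0v !add0r qf_block_sym.
Qed.
Lemma Gmat_qf (R : realType) n m T beta (L : 'M[R]_(T, n)) (D : 'M[R]_(n + n + m, T))
   (x1 x2 x4 : 'rV[R]_n) (x3 : 'rV[R]_m) :
  let Y := Xpart D *m L in let W := Upart D *m L in
  qf (Gmat beta L D) (row_mx (row_mx (row_mx x1 x2) x3) x4) =
  qf (Y - beta%:M) x1 - qf Y x2 - 2 * (x3 *m W *m x2^T) 0 0
    + 2 * (x3 *m W *m x4^T) 0 0 + qf Y x4.
Proof.
move=> Y W.
rewrite /Gmat -/Y -trmx_mul -/W !qf_block qf0m qfN !cr0m.
rewrite !mul_row_col !mulmx0 !add0r !mul_mx_row !tr_row_mx !mul_row_col.
rewrite !mulmx0 !mul0mx !add0r !addr0.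
have tN : (- W^T)^T = - W by rewrite linearN /= trmxK.
rewrite tN ?addE ?mulmx0 ?mul0mx ?add0r ?addr0 ?mulmxN ?mulNmx ?oppE ?cross_sym.
ring.
Qed.
Lemma sq_row (R : realType) p q (x : 'rV[R]_p) (y : 'rV[R]_q) :
  (row_mx x y *m (row_mx x y)^T) 0 0 = (x *m x^T) 0 0 + (y *m y^T) 0 0.
Proof. by rewrite tr_row_mx mul_row_col addE. Qed.

Lemma Nmat_qf (R : realType) n m T eps (D : 'M[R]_(n + n + m, T))
   (x1 x2 x4 : 'rV[R]_n) (x3 : 'rV[R]_m) :
  let q := x1 *m Zpart D - x2 *m Xpart D - x3 *m Upart D in
  qf (Nmat eps D) (row_mx (row_mx (row_mx x1 x2) x3) x4) =
  eps ^+ 2 * (n + n + m)%:R * T%:R *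
     ((x1 *m x1^T) 0 0 + (x2 *m x2^T) 0 0 + (x3 *m x3^T) 0 0) - (q *m q^T) 0 0.
Proof.
move=> q; rewrite /Nmat qf_block cr0m cr0m qf0m addr0 !addr0.
set p := row_mx (row_mx x1 x2) x3.
rewrite /qf !mulmxA -mulmxA.
have e : Dbar D *m p^T = (p *m (Dbar D)^T)^T by rewrite trmx_mul trmxK.
rewrite e.
have -> : p *m (Dbar D)^T = row_mx p q.
  rewrite /Dbar tr_col_mx trmx1 mul_mx_row mulmx1 !tr_row_mx !mul_row_col.
  by rewrite !linearN /= !trmxK.
set G := block_mx _ _ _ _.
change (qf G (row_mx p q) = eps ^+ 2 * (n + n + m)%:R * T%:R *
     ((x1 *m x1^T) 0 0 + (x2 *m x2^T) 0 0 + (x3 *m x3^T) 0 0) - (q *m q^T) 0 0).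
rewrite /G.
rewrite qf_block cr0m cr0m qf_scal qfN qf_scal mul1r !sq_row.
by rewrite ?addr0 ?add0r.
Qed.
Lemma sum_sq_le (R : realType) N (y : 'I_N -> R) :
  (\sum_i y i)^+2 <= N%:R * \sum_i y i ^+ 2.
Proof.
set Q := \sum_(i < N) y i ^+ 2; set S := \sum_(i < N) y i.
have h0 : 0 <= \sum_i \sum_j (y i - y j)^+2.
  by apply: sumr_ge0 => i _; apply: sumr_ge0 => j _; exact: sqr_ge0.
have e : \sum_i \sum_j (y i - y j)^+2 = (N%:R * Q - S^+2) *+ 2.
  under eq_bigr do under eq_bigr do rewrite sqrrB.
  under eq_bigr do rewrite !big_split /= sumrN sumr_const card_ord sumrMnl -mulr_sumr -/S -/Q -mulr_natr mulrnAr.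
  rewrite !big_split /= sumrN sumr_const card_ord.
  have e1 : \sum_(i < N) (y i ^+ 2 * 1 *+ N) = Q *+ N.
    by rewrite sumrMnl; under eq_bigr do rewrite mulr1.
  have e2 : \sum_(i < N) (y i * S *+ 2) = S^+2 *+ 2.
    by rewrite sumrMnl -mulr_suml expr2.
  rewrite e1 e2 -[Q *+ N]mulr_natl -[S^+2 *+ 2]mulr_natl -[(_ - _) *+ 2]mulr_natl; ring.
move: h0; rewrite e pmulrn_lge0 // subr_ge0.
by [].
Qed.
Lemma quad_bound (R : realType) N T (D : 'M[R]_(N,T)) (p : 'rV[R]_N) eps : 0 <= eps ->
  (forall i j, `|D i j| <= eps) ->
  ((p *m D) *m (p *m D)^T) 0 0 <= eps^+2 * N%:R * T%:R * (p *m p^T) 0 0.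
Proof.
move=> e0 HD.
have ->: ((p *m D) *m (p *m D)^T) 0 0 = \sum_t ((p *m D) 0 t)^+2.
  by rewrite mxE; apply: eq_bigr => t _; rewrite [_^T _ _]mxE expr2.
have ->: (p *m p^T) 0 0 = \sum_i (p 0 i)^+2.
  by rewrite mxE; apply: eq_bigr => t _; rewrite [_^T _ _]mxE expr2.
have each : forall t, ((p *m D) 0 t)^+2 <= eps^+2 * N%:R * \sum_i p 0 i ^+2.
  move=> t; rewrite mxE.
  have h1 : `|\sum_i p 0 i * D i t| <= eps * \sum_i `|p 0 i|.
    apply: le_trans (ler_norm_sum _ _ _) _; rewrite mulr_sumr; apply: ler_sum => i _.
    by rewrite normrM mulrC ler_wpM2r.
  rewrite -real_normK ?num_real //.
  apply: (@le_trans _ _ ((eps * \sum_i `|p 0 i|)^+2)).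
    by rewrite lerXn2r ?nnegrE ?mulr_ge0 ?sumr_ge0.
  rewrite exprMn -mulrA ler_wpM2l ?sqr_ge0 //.
  have := sum_sq_le (fun i => `|p 0 i|).
  have -> : \sum_i `|p 0 i| ^+ 2 = \sum_i p 0 i ^+ 2.
    by apply: eq_bigr => i _; rewrite real_normK ?num_real.
  by [].
apply: le_trans (ler_sum _ (fun t _ => each t)) _.
rewrite sumr_const card_ord -mulr_natr; rewrite le_eqVlt; apply/orP; left; apply/eqP; ring.
Qed.
Lemma le_bigmax_seq (R : realType) (I : eqType) (s : seq I) (F : I -> R) i :
  i \in s -> F i <= \big[Num.max/0]_(j <- s) F j.
Proof.
elim: s => // a s IH; rewrite inE big_cons => /orP [/eqP ->| /IH h].
  by rewrite le_max lexx.
by rewrite le_max h orbT.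
Qed.

Lemma maxnorm_entry (R : realType) p q (M : 'M[R]_(p,q)) i j : `|M i j| <= mx_maxnorm M.
Proof.
rewrite /mx_maxnorm.
apply: le_trans (le_bigmax_seq (fun i => \big[Num.max/0]_(j < q) `|M i j|) _) => /=.
  exact: (le_bigmax_seq (fun j => `|M i j|)) (mem_index_enum j).
exact: mem_index_enum.
Qed.
Lemma qf_add (R : realType) k (Y : 'M[R]_k) (a b : 'rV[R]_k) : Y^T = Y ->
  qf Y (a + b) = qf Y a + 2 * (a *m Y *m b^T) 0 0 + qf Y b.
Proof. by move=> HY; rewrite -[a]scale1r -[b]scale1r qf_comb // !scale1r; ring. Qed.

Lemma qf_opp (R : realType) k (Y : 'M[R]_k) (a : 'rV[R]_k) : qf Y (- a) = qf Y a.
Proof.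
have t : (- a)^T = - a^T by rewrite linearN.
by rewrite /qf t mulmxN !mulNmx opprK.
Qed.

Lemma sq_opp (R : realType) k (a : 'rV[R]_k) : ((- a) *m (- a)^T) 0 0 = (a *m a^T) 0 0.
Proof.
have t : (- a)^T = - a^T by rewrite linearN.
by rewrite t mulmxN !mulNmx opprK.
Qed.

Lemma unit_of_coercive (R : realType) k (Y : 'M[R]_k) :
  (forall x, (x *m x^T) 0 0 <= qf Y x) -> Y \in unitmx.
Proof.
move=> H; rewrite unitmxE unitfE; apply/negP => /det0P [v vnz vY].
have z0 : (0 : 'M[R]_1) 0 0 = 0 by rewrite mxE.
have := H v; rewrite /qf vY mul0mx z0 => h.
have h2 : (v *m v^T) 0 0 = 0 by apply/eqP; rewrite eq_le h rv_sq_pos.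
by move/negP: vnz; apply; apply/eqP; exact: rv_sq_eq0.
Qed.

Lemma Xpart_add (R : realType) n m T (Z X : 'M[R]_(n,T)) (U : 'M[R]_(m,T)) Delta :
  [/\ Zpart (col_mx (col_mx Z X) U + Delta) = Z + Zpart Delta,
      Xpart (col_mx (col_mx Z X) U + Delta) = X + Xpart Delta &
      Upart (col_mx (col_mx Z X) U + Delta) = U + Upart Delta].
Proof.
rewrite -[Delta]vsubmxK -[usubmx Delta]vsubmxK /Zpart /Xpart /Upart.
by rewrite !add_col_mx !col_mxKu !col_mxKd.
Qed.
Lemma part2 (R : realType) n m T (A : 'M[R]_n) (B : 'M[R]_(n,m)) (Z X : 'M[R]_(n,T))
  (U : 'M[R]_(m,T)) (Q : 'M[R]_n) (V : 'M[R]_m) eps JLQR Delta L S alpha beta :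
  Z = A *m X + B *m U -> 0 < eps ->
  RS_feasible Q V eps JLQR (col_mx (col_mx Z X) U + Delta) L S alpha beta ->
  (forall i j, `|Delta i j| <= eps) ->
  schur (A + B *m FK L (col_mx (col_mx Z X) U + Delta)).
Proof.
move=> HZ he [_ HF HG ha hb] hD.
set D := col_mx (col_mx Z X) U + Delta in HF HG *.
have [HY _ _ F3] := Fmat_facts HF.
set Y := Xpart D *m L in HY F3 *; set W := Upart D *m L.
have Hc : forall x, (x *m x^T) 0 0 <= qf Y x.
  move=> x; have := F3 x 0; rewrite cr0r qf0v mulr0 !addr0 qfB qf_scal mul1r subr_ge0.
  by [].
have Yu := unit_of_coercive Hc.
set K := FK L D.
have KY : K *m Y = W by rewrite /K /FK mulmxKV.
apply: (lyap_schur HY) => x.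
  by apply: le_trans (Hc x); exact: rv_sq_pos.
set x2 := x *m A; set x3 := x *m B; set k := x3 *m K.
have hG := psd_qf HG (row_mx (row_mx (row_mx x x2) x3) (- k)).
rewrite qfB qfZ Gmat_qf Nmat_qf /= -/Y -/W in hG.
set p' := row_mx (row_mx x (- x2)) (- x3).
have eq : x *m Zpart D - x2 *m Xpart D - x3 *m Upart D = p' *m Delta.
  have [e1 e2 e3] := Xpart_add Z X U Delta.
  rewrite /D e1 e2 e3 HZ.
  rewrite -[in RHS](vsubmxK Delta) -[usubmx Delta in RHS]vsubmxK !mul_row_col.
  rewrite -/(Zpart Delta) -/(Xpart Delta) -/(Upart Delta).
  rewrite !mulmxDr !mulmxA -/x2 -/x3 !mulNmx.
  move: (x2 *m X) (x3 *m U) (x *m Zpart Delta) (x2 *m Xpart Delta) (x3 *m Upart Delta).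
  move=> a1 a2 a3 a4 a5; apply/matrixP => i j; rewrite !mxE; ring.
rewrite eq in hG.
have hq := quad_bound p' (ltW he) hD.
have hp : (p' *m p'^T) 0 0 = (x *m x^T) 0 0 + (x2 *m x2^T) 0 0 + (x3 *m x3^T) 0 0.
  by rewrite !sq_row !sq_opp.
rewrite hp in hq.
move: hq; rewrite -subr_ge0 => hq.
have hN := mulr_ge0 ha hq.
have e4 : x3 *m W = k *m Y by rewrite -KY mulmxA.
have h1 : (k *m Y *m x2^T) 0 0 = (x2 *m Y *m k^T) 0 0 by rewrite -{1}HY cross_sym.
have h2 : (k *m Y *m (- k)^T) 0 0 = - qf Y k.
  by rewrite /qf linearN /= mulmxN oppE.
rewrite e4 h1 h2 qf_opp qfB qf_scal in hG.
rewrite mulmxDr mulmxA -/x2 -/x3 -/k qf_add //.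
have hx := rv_sq_pos x.
have hb2 : (x *m x^T) 0 0 <= beta * (x *m x^T) 0 0 by rewrite ler_peMl.
move: hG hN; set Nv := alpha * _ => hG hN.
lra.
Qed.
Lemma psdP (R : realType) k (M : 'M[R]_k) : M^T = M -> (forall x, 0 <= qf M x) -> psd M.
Proof. by move=> h1 h2; split => // v; have := h2 v^T; rewrite /qf trmxK. Qed.

Lemma qf_scal_block (R : realType) n (aa : R) (b : 'M[R]_(1,n)) (P' : 'M[R]_n) s y :
  qf (block_mx aa%:M b b^T P') (row_mx s%:M y) =
  aa * s^+2 + 2 * s * (b *m y^T) 0 0 + qf P' y.
Proof.
rewrite qf_block_sym qf_scal tr_scalar_mx mul_scalar_mx scaleE mul_scalar_mx -scalemxAl scaleE.
have -> : (s%:M : 'M[R]_1) 0 0 = s by rewrite mxE eqxx mulr1n.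
ring.
Qed.

Lemma psd_factor (R : realType) n (P : 'M[R]_n) : psd P -> exists C : 'M[R]_n, P = C^T *m C.
Proof.
elim: n P => [|n IH] P HP.
  by exists 0; apply/matrixP => [[]].
pose P1 : 'M[R]_(1 + n) := P.
have eP : P1 = block_mx (ulsubmx P1) (ursubmx P1) (dlsubmx P1) (drsubmx P1) by rewrite submxK.
set aa := ulsubmx P1 0 0.
have ea : ulsubmx P1 = aa%:M by rewrite [LHS]mx11_scalar.
set b := ursubmx P1; set P' := drsubmx P1.
have [Hs _] := HP.
have Hs1 : P1^T = P1 by [].
move: Hs1; rewrite eP tr_block_mx => /eq_block_mx [_ _ ec eP'].
rewrite -ec ea -/b -/P' in eP.
have Hq : forall s y, 0 <= aa * s^+2 + 2 * s * (b *m y^T) 0 0 + qf P' y.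
  move=> s y; rewrite -qf_scal_block -eP; exact: (psd_qf HP).
have Hq' : forall y, 0 <= qf P' y.
  by move=> y; have := Hq 0 y; rewrite expr0n /= !mulr0 mul0r !add0r.
have a0 : 0 <= aa by have := Hq 1 0; rewrite trmx0 mulmx0 mxE qf0v !mulr0 !addr0 expr1n mulr1.
have hb : aa = 0 -> b = 0.
  move=> az; apply/rowP => j.
  have -> : (0 : 'rV[R]_n) 0 j = 0 by rewrite mxE.
  pose y : 'rV[R]_n := delta_mx 0 j.
  have eby : (b *m y^T) 0 0 = b 0 j.
    rewrite mxE (bigD1 j) //= big1 ?addr0; first by rewrite !mxE !eqxx mulr1.
    by move=> i /negbTE ne; rewrite !mxE ne andbF mulr0.
  set q := qf P' y; set be := b 0 j.
  apply/eqP; apply/negP => /negP bnz.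
  have := Hq (- (q + 1) / (2 * be)) y; rewrite az eby mul0r add0r.
  have -> : 2 * (- (q + 1) / (2 * be)) * be = - (q + 1).
    by field.
  have := Hq' y; rewrite -/q; lra.
set sa := Num.sqrt aa.
set P2 := P' - aa^-1 *: (b^T *m b).
have HP2 : psd P2.
  apply: psdP.
    by rewrite /P2 linearD linearN /= linearZ /= trmx_mul trmxK eP'.
  move=> y; rewrite /P2 qfB qfZ.
  have [az|anz] := eqVneq aa 0.
    by rewrite az invr0 mul0r subr0.
  have apos : 0 < aa by rewrite lt_def anz a0.
  have := Hq (- (b *m y^T) 0 0 / aa) y.
  have -> : qf (b^T *m b) y = (b *m y^T) 0 0 ^+ 2.
    have e1 : (y *m b^T) 0 0 = (b *m y^T) 0 0 by rewrite -entry_tr trmx_mul trmxK.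
    rewrite /qf mulmxA -[y *m b^T *m b *m y^T]mulmxA [X in X = _]mxE big_ord1 e1 expr2.
    by [].
  set be := (b *m y^T) 0 0.
  have -> : aa * (- be / aa) ^+ 2 + 2 * (- be / aa) * be = - (aa^-1 * be^+2).
    by field; rewrite anz.
  lra.
have [C' eC'] := IH P2 HP2.
exists (block_mx sa%:M (sa^-1 *: b) 0 C' : 'M[R]_(1 + n)).
transitivity P1; first by [].
have sa2 : sa * sa = aa by rewrite -expr2 sqr_sqrtr.
have sab : sa *: (sa^-1 *: b) = b.
  have [az|anz] := eqVneq aa 0; first by rewrite (hb az) !scaler0.
  have sanz : sa != 0 by apply/negP => /eqP h; move: sa2; rewrite h mul0r => /esym/eqP; rewrite (negbTE anz).
  by rewrite scalerA mulfV // scale1r.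
rewrite eP.
set CC := (block_mx sa%:M (sa^-1 *: b) 0 C' : 'M[R]_(1 + n)).
change (block_mx aa%:M b b^T P' = @trmx R (1 + n) (1 + n) CC *m CC).
rewrite /CC tr_block_mx !trmx0 tr_scalar_mx mulmx_block !mulmx0 !mul0mx ?addr0 ?add0r.
congr block_mx.
- by rewrite -scalar_mxM sa2.
- by rewrite mul_scalar_mx sab.
- by rewrite scalar_mxC mul_scalar_mx -linearZ /= sab.
- rewrite -eC' /P2 linearZ /= [(sa^-1 *: b)^T]linearZ /= -scalemxAl scalerA -expr2 exprVn sqr_sqrtr //.
  by rewrite addrC subrK.
Qed.
Lemma ereal_bound (R : realType) n (f : 'I_n -> nat -> R) (J : R) : (forall i t, 0 <= f i t) ->
  (forall N, \sum_(t < N) \sum_(i < n) f i t <= J) ->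
  (\sum_(i < n) \sum_(t <oo) (f i t)%:E <= J%:E)%E.
Proof.
move=> f0 HN.
rewrite -nneseries_sum; last by move=> i t _; rewrite lee_fin.
apply: (lime_le (is_cvg_nneseries _)).
  by move=> t _ _; apply: sume_ge0 => i _; rewrite lee_fin.
apply: nearW => N /=.
under eq_bigr do rewrite sumEFin.
by rewrite sumEFin lee_fin big_mkord.
Qed.
Lemma sq_entries (R : realType) k (r : 'rV[R]_k) : (r *m r^T) 0 0 = \sum_i r 0 i ^+ 2.
Proof. by rewrite mxE; apply: eq_bigr => i _; rewrite [r^T _ _]mxE expr2. Qed.

Lemma lyap_iter (R : realType) n (M Y : 'M[R]_n) :
  (forall y, qf Y (y *m M) + (y *m y^T) 0 0 <= qf Y y) -> (forall y, 0 <= qf Y y) ->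
  forall N y, \sum_(t < N) ((y *m M ^+ t) *m (y *m M ^+ t)^T) 0 0 <= qf Y y.
Proof.
move=> Hl Hp; elim=> [|N IH] y; first by rewrite big_ord0.
rewrite big_ord_recl expr0 mulmx1.
under eq_bigr do rewrite exprS mulmxA.
have := IH (y *m M); have := Hl y; lra.
Qed.

Lemma tr_qf (R : realType) p n (P : 'M[R]_(p, n)) (Y : 'M[R]_n) :
  \tr (P *m Y *m P^T) = \sum_j qf Y (row j P).
Proof.
rewrite /mxtrace; apply: eq_bigr => j _; rewrite /qf -row_mul.
rewrite !mxE; apply: eq_bigr => k _; rewrite !mxE.
by [].
Qed.

Lemma col_term (R : realType) p n (P : 'M[R]_(p, n)) (N : 'M[R]_n) i :
  ((P *m (N *m delta_mx i (@ord0 0)))^T *m (P *m (N *m delta_mx i (@ord0 0)))) 0 0 = \sum_j (P *m N) j i ^+ 2.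
Proof.
rewrite [P *m (N *m _)]mulmxA -colE [X in X = _]mxE.
by apply: eq_bigr => j _; rewrite !mxE expr2.
Qed.

Lemma energy (R : realType) p n (P : 'M[R]_(p, n)) (M Y : 'M[R]_n) :
  (forall y, qf Y (y *m M) + (y *m y^T) 0 0 <= qf Y y) -> (forall y, 0 <= qf Y y) ->
  forall N, \sum_(t < N) \sum_(i < n) \sum_(j < p) (P *m M ^+ t) j i ^+ 2 <= \tr (P *m Y *m P^T).
Proof.
move=> Hl Hp N; rewrite tr_qf.
have -> : \sum_(t < N) \sum_(i < n) \sum_(j < p) (P *m M ^+ t) j i ^+ 2 =
          \sum_(j < p) \sum_(t < N) ((row j P *m M ^+ t) *m (row j P *m M ^+ t)^T) 0 0.
  under eq_bigr do rewrite exchange_big.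
  rewrite exchange_big; apply: eq_bigr => j _; apply: eq_bigr => t _.
  by rewrite sq_entries; apply: eq_bigr => i _; rewrite -row_mul [row _ _ _ _]mxE.
by apply: ler_sum => j _; exact: lyap_iter.
Qed.
Lemma qf_delta (R : realType) k (S : 'M[R]_k) j : qf S (delta_mx 0 j) = S j j.
Proof. by rewrite /qf -rowE trmx_delta -colE !mxE. Qed.

Lemma part1 (R : realType) n m T (A : 'M[R]_n) (B : 'M[R]_(n,m)) (Z X : 'M[R]_(n,T))
  (U : 'M[R]_(m,T)) (Q : 'M[R]_n) (Rw V : 'M[R]_m) eps JLQR L S alpha beta :
  Z = A *m X + B *m U -> 0 < eps -> psd Q -> pd V -> V *m V = Rw ->
  RS_feasible Q V eps JLQR (col_mx (col_mx Z X) U + 0) L S alpha beta ->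
  (lqr_cost A B Q Rw (FK L (col_mx (col_mx Z X) U + 0)) <= JLQR%:E)%E.
Proof.
move=> HZ he HQ [HVs _] HVV Hf.
have h0 : forall i j, `|(0 : 'M[R]_(n + n + m, T)) i j| <= eps.
  by move=> i j; rewrite mxE normr0 ltW.
have Hs := part2 HZ he Hf h0.
rewrite /lqr_cost asboolT //.
set D := col_mx (col_mx Z X) U + 0 in Hf Hs *.
case: Hf => [Htr HF HG ha hb].
have [HY _ F2 F3] := Fmat_facts HF.
set Y := Xpart D *m L in Htr HY F2 F3 *; set W := Upart D *m L in F2 *.
have eD : D = col_mx (col_mx Z X) U by rewrite /D addr0.
have eZ : Zpart D = Z by rewrite /Zpart eD !col_mxKu.
have eX : Xpart D = X by rewrite /Xpart eD col_mxKu col_mxKd.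
have eU : Upart D = U by rewrite /Upart eD col_mxKd.
have Hc : forall x, (x *m x^T) 0 0 <= qf Y x.
  move=> x; have := F3 x 0; rewrite cr0r qf0v mulr0 !addr0 qfB qf_scal mul1r subr_ge0.
  by [].
have Yu := unit_of_coercive Hc.
set K := FK L D.
have KY : K *m Y = W by rewrite /K /FK mulmxKV.
set M := A + B *m K.
have eZl : Zpart D *m L = M *m Y.
  rewrite eZ HZ mulmxDl /M mulmxDl -!mulmxA -eX -eU -/Y -/W.
  by rewrite mulVmx // mulmx1.
have Hly : forall y, qf Y (y *m M) + (y *m y^T) 0 0 <= qf Y y.
  move=> y; have := F3 y (- (y *m M)); rewrite eZl qf_opp qfB qf_scal mul1r.
  have -> : (y *m (M *m Y) *m (- (y *m M))^T) 0 0 = - qf Y (y *m M).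
    by rewrite /qf linearN /= mulmxN oppE mulmxA.
  lra.
have Hp : forall y, 0 <= qf Y y by move=> y; apply: le_trans (Hc y); exact: rv_sq_pos.
have [C eC] := psd_factor HQ.
pose VK := V *m K.
pose f i t := \sum_(j < n) (C *m M ^+ t) j i ^+ 2 + \sum_(j < m) (VK *m M ^+ t) j i ^+ 2.
rewrite (eq_bigr (fun i => (\sum_(t <oo) (f i t)%:E)%E)); last first.
  move=> i _; apply: eq_eseriesr => t _; congr (_%:E).
  rewrite /f -!col_term; congr (_ + _).
    by rewrite eC !trmx_mul !mulmxA.
  by rewrite -HVV /VK !trmx_mul HVs !mulmxA.
apply: ereal_bound.
  by move=> i t; rewrite /f addr_ge0 // sumr_ge0 // => j _; exact: sqr_ge0.
move=> N; rewrite /f.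
under eq_bigr do rewrite big_split /=.
rewrite big_split /=.
have h1 := energy C Hly Hp N.
have h2 := energy VK Hly Hp N.
have e1 : \tr (C *m Y *m C^T) = \tr (Q *m Y) by rewrite mxtrace_mulC mulmxA -eC.
have h3 : \tr (VK *m Y *m VK^T) <= \tr S.
  rewrite tr_qf /mxtrace; apply: ler_sum => j _.
  have := F2 (delta_mx 0 j) (- row j VK).
  rewrite qf_delta qf_opp -KY.
  have -> : delta_mx 0 j *m (V *m (K *m Y)) = row j VK *m Y by rewrite rowE /VK !mulmxA.
  have -> : (row j VK *m Y *m (- row j VK)^T) 0 0 = - qf Y (row j VK).
    by rewrite /qf linearN /= mulmxN oppE.
  lra.
rewrite e1 in h1; lra.
Qed.

Theorem proposition7 (R : realType) (n m T : nat)
    (A : 'M[R]_n) (B : 'M[R]_(n, m))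
    (Z X : 'M[R]_(n, T)) (U : 'M[R]_(m, T))
    (Q : 'M[R]_n) (Rw : 'M[R]_m) (V : 'M[R]_m) (eps JLQR : R)
    (Delta : 'M[R]_(n + n + m, T))
    (L : 'M[R]_(T, n)) (S : 'M[R]_m) (alpha beta : R) :
  Z = A *m X + B *m U ->
  0 < eps -> 0 < JLQR ->
  psd Q -> pd Rw -> pd V -> V *m V = Rw ->
  let DD := col_mx (col_mx Z X) U + Delta in
  RS_feasible Q V eps JLQR DD L S alpha beta ->
  let K := FK L DD in
  (Delta = 0 -> (lqr_cost A B Q Rw K <= JLQR%:E)%E) /\
  (mx_maxnorm Delta <= eps -> schur (A + B *m K)).
Proof.
move=> HZ he hJ HQ HR HV HVV DD Hf K; split.
  move=> HD; rewrite /K /DD; move: Hf; rewrite /DD HD => Hf.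
  exact: (part1 HZ he HQ HV HVV Hf).
move=> hD; exact: (part2 HZ he Hf (fun i j => le_trans (maxnorm_entry Delta i j) hD)).
Qed.
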